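(* Let $K$ be a field, $S=K[[x_1,\dots,x_n]]$, $E$ the $S$-module described in the context, and fix a term order $\prec$ on $E$. Let $N\subset E$ be an $S$-submodule of finite length. Let $N_0=T_1(N)$, and inductively, as long as $N_{i-1}\neq N$, choose $\xi_i\in N$ with $$\mathrm{LT}_\prec(\xi_i)=\min_\prec\{\mathrm{LT}_\prec(\eta)\mid \eta\in N,\ \mathrm{LT}_\prec(\eta)\notin\mathrm{LT}_\prec(N_{i-1})\},$$ and set $N_i=N_{i-1}+S\xi_i$. Then this yields a finite chain of $S$-modules $T_1(N)=N_0\subset N_1\subset\cdots\subset N_k=N$, and: (1) $N_i/N_{i-1}\cong K$ for all $1\le i\le k$; (2) $\mathrm{LT}_\prec(\xi_1)\prec\mathrm{LT}_\prec(\xi_2)\prec\cdots\prec\mathrm{LT}_\prec(\xi_k)$; (3) each $N_i$ does not depend on the choice of $\xi_i$; (4) $\xi_i$ can be chosen so that no term occurring in $\xi_i$ lies in $\mathrm{LT}_\prec(N_{i-1})$, and such a $\xi_i$ is unique up to multiplication by an element of $K^\times$.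
   Context: $E=K[x_1^{-1},\dots,x_n^{-1}]\cdot\frac{1}{x_1\cdots x_n}$ is the $K$-vector space with basis the terms $\frac{1}{x^{\alpha+1}}=\frac{1}{x_1^{\alpha_1+1}\cdots x_n^{\alpha_n+1}}$, $\alpha\in\mathbb{Z}^n_{\ge0}$, with $S$-module structure $x^{\gamma}\cdot\frac{1}{x^{\beta+1}}=\frac{1}{x^{\beta-\gamma+1}}$ if $\beta-\gamma\in\mathbb{Z}^n_{\ge0}$ and $0$ otherwise, extended bilinearly. A term order on $E$ is a total order $\prec$ on terms such that $\frac{1}{x_1\cdots x_n}\preceq\frac{1}{x^{\alpha+1}}$ for all $\alpha$, and $\frac{1}{x^{\alpha+1}}\prec\frac{1}{x^{\beta+1}}$ implies $\frac{1}{x^{\alpha+\gamma+1}}\prec\frac{1}{x^{\beta+\gamma+1}}$ for all $\alpha,\beta,\gamma$ (such an order is a well-ordering). For $0\neq\eta\in E$, $\mathrm{LT}_\prec(\eta)$ is the $\prec$-largest term occurring in $\eta$ with nonzero coefficient; for a subset $N\subset E$, $\mathrm{LT}_\prec(N)=\{\mathrm{LT}_\prec(\eta)\mid 0\ne\eta\in N\}$. For an $S$-submodule $N\subset E$, $T_1(N)$ denotes the $S$-submodule of $N$ generated by all terms of $E$ that lie in $N$. *)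

(* Defs.v *)
From HB Require Import structures.
From mathcomp Require Export all_boot all_order all_algebra.
From mathcomp Require Export mpoly.
Set Implicit Arguments. Unset Strict Implicit. Unset Printing Implicit Defensive.
Import GRing.Theory.
Local Open Scope ring_scope.

Section InverseSystem.
Variables (K : fieldType) (n : nat).

(* E : the K-vector space with basis the terms 1/x^(alpha+1), alpha in N^n.
   We encode the term 1/x^(alpha+1) as the monomial 'X_[alpha], so an element
   of E is a finite K-linear combination of terms, i.e. an element of
   {mpoly K[n]} (the polynomial structure is only used as a finitely
   supported coefficient map; multiplication of mpolys is never used). *)
Definition E := {mpoly K[n]}.

Definition term (a : 'X_{1..n}) : E := 'X_[a].

(* S = K[[x_1,...,x_n]] : formal power series, i.e. arbitrary coefficient
   maps N^n -> K; f g is the coefficient of x^g. *)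
Definition S := 'X_{1..n} -> K.

(* The S-module structure of E:
   x^g . 1/x^(b+1) = 1/x^(b-g+1) if g <= b, 0 otherwise, extended bilinearly
   (for a power series f only the finitely many g <= b contribute). *)
Definition act (f : S) (eta : E) : E :=
  \sum_(m <- msupp eta)
     eta@_m *: \sum_(g : 'X_{1..n < (mdeg m).+1} | (bmnm g <= m)%MM)
                  f (bmnm g) *: term (m - bmnm g)%MM.

Definition subsetE (A B : E -> Prop) := forall x, A x -> B x.
Definition sameE (A B : E -> Prop) := forall x, A x <-> B x.

Definition is_submodule (N : E -> Prop) : Prop :=
  [/\ N 0, (forall a b, N a -> N b -> N (a + b)) &
      (forall (f : S) a, N a -> N (act f a))].

Definition gen (A : E -> Prop) : E -> Prop :=
  fun x => forall M, is_submodule M -> subsetE A M -> M x.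

Definition T1 (N : E -> Prop) : E -> Prop :=
  gen (fun x => N x /\ exists a, x = term a).

Definition addS (M : E -> Prop) (xi : E) : E -> Prop :=
  fun x => exists a (f : S), M a /\ x = a + act f xi.

Definition finite_length (N : E -> Prop) : Prop :=
  exists B : nat, forall (c : nat -> E -> Prop) (k : nat),
    (forall i, (i <= k)%N -> is_submodule (c i) /\ subsetE (c i) N) ->
    (forall i, (i < k)%N -> subsetE (c i) (c i.+1) /\ ~ sameE (c i) (c i.+1)) ->
    (k <= B)%N.

(* Term orders on E: ord a b means 1/x^(a+1) < 1/x^(b+1) (strict). *)
Definition term_order (ord : rel 'X_{1..n}) : Prop :=
  [/\ irreflexive ord, transitive ord,
      (forall a b, a != b -> ord a b || ord b a),
      (forall a, a != 0%MM -> ord 0%MM a) &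
      (forall a b c, ord a b -> ord (a + c)%MM (b + c)%MM)].

Variable ord : rel 'X_{1..n}.

(* Leading term (given by its exponent) of eta; meaningful for eta != 0. *)
Definition LT (eta : E) : 'X_{1..n} :=
  foldr (fun m acc => if ord acc m then m else acc) 0%MM (msupp eta).

Definition LTset (M : E -> Prop) (t : 'X_{1..n}) : Prop :=
  exists eta, [/\ M eta, eta != 0 & LT eta = t].

(* The chain N_0 = T_1(N), N_(i+1) = N_i + S xi_(i+1) for a sequence s of
   choices xi_1, ..., xi_k (stored 0-indexed in s). *)
Fixpoint chain (N : E -> Prop) (s : seq E) (i : nat) : E -> Prop :=
  match i with
  | 0 => T1 N
  | i'.+1 => addS (chain N s i') (nth 0 s i')
  end.

Definition valid_step (N M : E -> Prop) (xi : E) : Prop :=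
  [/\ ~ sameE M N, N xi, xi != 0, ~ LTset M (LT xi) &
      forall eta, N eta -> eta != 0 -> ~ LTset M (LT eta) ->
                  ~~ ord (LT eta) (LT xi)].

Definition valid_run (N : E -> Prop) (s : seq E) : Prop :=
  forall i, (i < size s)%N -> valid_step N (chain N s i) (nth 0 s i).

(* K viewed as the S-module S/m: f . c = f(0) c. An S-isomorphism
   M'/M ~= K is given by an S-linear surjection M' -> K with kernel M. *)
Definition quot_iso_K (M' M : E -> Prop) : Prop :=
  exists phi : E -> K,
    [/\ (forall a b, M' a -> M' b -> phi (a + b) = phi a + phi b),
        (forall (f : S) a, M' a -> phi (act f a) = f 0%MM * phi a),
        (forall c : K, exists a, M' a /\ phi a = c) &
        (forall a, M' a -> (phi a = 0 <-> M a))].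

End InverseSystem.

(* Main.v *)
Require Import Defs.
From mathcomp Require Import ssrcomplements.
From Stdlib Require Import Classical ClassicalEpsilon.
Set Implicit Arguments. Unset Strict Implicit. Unset Printing Implicit Defensive.
Import GRing.Theory.
Local Open Scope ring_scope.

Section Ord.
Variables (K : fieldType) (n : nat) (ord : rel 'X_{1..n}).
Hypothesis Hord : term_order ord.
Local Notation mono := 'X_{1..n}.
Local Notation P := {mpoly K[n]}.

Definition leo (u v : mono) := (u == v) || ord u v.

Lemma ord_irr u : ~~ ord u u. Proof. by case: Hord => irr _ _ _ _; rewrite irr. Qed.
Lemma ord_trans u v w : ord u v -> ord v w -> ord u w.
Proof. by case: Hord => _ tr _ _ _ h1 h2; apply: (tr v u w). Qed.
Lemma ord_total u v : u != v -> ord u v || ord v u.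
Proof. by case: Hord => _ _ tot _ _; apply: tot. Qed.
Lemma ord0 u : u != 0%MM -> ord 0%MM u.
Proof. by case: Hord => _ _ _ h _; apply: h. Qed.
Lemma ordD a b c : ord a b -> ord (a+c)%MM (b+c)%MM.
Proof. by case: Hord => _ _ _ _ h; apply: h. Qed.

Lemma leo_refl u : leo u u. Proof. by rewrite /leo eqxx. Qed.
Lemma ord_leo u v : ord u v -> leo u v. Proof. by move=> h; rewrite /leo h orbT. Qed.
Lemma leo_ord_trans u v w : leo u v -> ord v w -> ord u w.
Proof. by case/orP=> [/eqP->//|h1 h2]; apply: ord_trans h1 h2. Qed.
Lemma ord_leo_trans u v w : ord u v -> leo v w -> ord u w.
Proof. by move=> h1; case/orP=> [/eqP<-//|h2]; apply: ord_trans h1 h2. Qed.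
Lemma leo_trans u v w : leo u v -> leo v w -> leo u w.
Proof. by move=> h1; case/orP=> [/eqP<-//|h2]; apply/ord_leo/(leo_ord_trans h1 h2). Qed.
Lemma leo_total u v : leo u v || ord v u.
Proof. rewrite /leo; case: (eqVneq u v) => //= ne; exact: ord_total. Qed.
Lemma leoNord u v : leo u v -> ~~ ord v u.
Proof. by move=> h; apply/negP=> h'; move: (leo_ord_trans h h'); rewrite (negbTE (ord_irr u)). Qed.
Lemma Nord_leo u v : ~~ ord v u -> leo u v.
Proof. by move=> h; move: (leo_total u v); rewrite (negbTE h) orbF. Qed.
Lemma leo_antisym u v : leo u v -> leo v u -> u = v.
Proof. by move=> h; case/orP=> [/eqP->//|h']; move: (leoNord h); rewrite h'. Qed.
Lemma leo_neq u v : leo u v -> u != v -> ord u v.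
Proof. by case/orP=> [/eqP->|//]; rewrite eqxx. Qed.

Lemma ord_sub m g : (g <= m)%MM -> g != 0%MM -> ord (m - g)%MM m.
Proof.
move=> le nz; have := ordD (m - g)%MM (ord0 nz).
by rewrite add0m addmC submK.
Qed.

Lemma LT_fold_max (s : seq mono) m : m \in s ->
  leo m (foldr (fun m acc => if ord acc m then m else acc) 0%MM s).
Proof.
elim: s => //= x s IH; rewrite in_cons; case/orP=> [/eqP->|ms].
  by case: ifP => [_|/negbT h]; [exact: leo_refl|exact: Nord_leo].
case: ifP => [h|_]; last exact: IH.
exact/ord_leo/(leo_ord_trans (IH ms) h).
Qed.

Lemma LT_fold_in (s : seq mono) :
  foldr (fun m acc => if ord acc m then m else acc) 0%MM s \in 0%MM :: s.
Proof.
elim: s => [|x s IH] /=; first by rewrite mem_seq1.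
case: ifP => _; first by rewrite !in_cons eqxx orbT.
move: IH; rewrite !in_cons; case/orP=> [->//|->]; by rewrite !orbT.
Qed.

Lemma LT_max (eta : P) m : m \in msupp eta -> leo m (LT ord eta).
Proof. exact: LT_fold_max. Qed.

Lemma LT_supp (eta : P) : eta != 0 -> LT ord eta \in msupp eta.
Proof.
move=> nz; have := LT_fold_in (msupp eta); rewrite in_cons.
case/orP=> [/eqP e|//].
have: msupp eta != [::] by rewrite msupp_eq0.
case E0: (msupp eta) => [|x s] //= _.
have xin : x \in msupp eta by rewrite E0 mem_head.
have := LT_max xin; rewrite /LT E0 in e *; rewrite -E0 -/(LT ord eta).
rewrite /LT E0 e => h.
case: (eqVneq x 0%MM) => [ex|nx]; first by rewrite -E0 -ex.
by move: (leo_neq h nx) (ord0 nx) => h1 h2; move: (ord_trans h1 h2); rewrite (negbTE (ord_irr _)).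
Qed.

Definition below (t : mono) (eta : P) := forall m, m \in msupp eta -> leo m t.
Definition sbelow (t : mono) (eta : P) := forall m, m \in msupp eta -> ord m t.

Lemma LT_below eta : below (LT ord eta) eta. Proof. exact: LT_max. Qed.
Lemma below_LT t eta : eta != 0 -> below t eta -> leo (LT ord eta) t.
Proof. by move=> nz h; apply/h/LT_supp. Qed.
Lemma sbelow_LT t eta : eta != 0 -> sbelow t eta -> ord (LT ord eta) t.
Proof. by move=> nz h; apply/h/LT_supp. Qed.
Lemma LT_unique t eta : t \in msupp eta -> below t eta -> LT ord eta = t.
Proof.
move=> tin h; have nz : eta != 0.
  by apply/negP=> /eqP e; move: tin; rewrite e mcoeff_msupp mcoeff0 eqxx.
by apply: leo_antisym; [exact: below_LT|exact: LT_max].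
Qed.

Lemma below_weak t t' eta : below t eta -> leo t t' -> below t' eta.
Proof. by move=> h l m /h h'; apply: leo_trans h' l. Qed.
Lemma below0 t : below t (0 : P).
Proof. by move=> m; rewrite mcoeff_msupp mcoeff0 eqxx. Qed.
Lemma sbelow0 t : sbelow t (0 : P).
Proof. by move=> m; rewrite mcoeff_msupp mcoeff0 eqxx. Qed.
Lemma belowD t a b : below t a -> below t b -> below t (a + b).
Proof. by move=> ha hb m /msuppD_le; rewrite mem_cat; case/orP; [apply: ha|apply: hb]. Qed.
Lemma sbelowD t a b : sbelow t a -> sbelow t b -> sbelow t (a + b).
Proof. by move=> ha hb m /msuppD_le; rewrite mem_cat; case/orP; [apply: ha|apply: hb]. Qed.
Lemma belowZ t c a : below t a -> below t (c *: a).
Proof. by move=> ha m /msuppZ_le; apply: ha. Qed.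
Lemma sbelowZ t c a : sbelow t a -> sbelow t (c *: a).
Proof. by move=> ha m /msuppZ_le; apply: ha. Qed.
Lemma belowN t a : below t a -> below t (- a).
Proof. by move=> h; rewrite -scaleN1r; apply: belowZ. Qed.
Lemma sbelowN t a : sbelow t a -> sbelow t (- a).
Proof. by move=> h; rewrite -scaleN1r; apply: sbelowZ. Qed.

Lemma cancel_below t (a b : P) : below t a -> below t b -> b@_t != 0 ->
  sbelow t (a - (a@_t / b@_t) *: b).
Proof.
move=> ha hb nz m min; have hm : leo m t.
  exact: (belowD ha (belowN (@belowZ _ (a@_t / b@_t) _ hb)) min).
apply: (leo_neq hm); apply/negP=> /eqP e; move: min; rewrite e mcoeff_msupp.
by rewrite mcoeffB mcoeffZ divfK // subrr eqxx.
Qed.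

End Ord.

Section Act.
Variables (K : fieldType) (n : nat).
Local Notation mono := 'X_{1..n}.
Local Notation P := {mpoly K[n]}.

Definition Lsum (A : mono -> P) (p : P) : P := \sum_(m <- msupp p) p@_m *: A m.

Lemma LsumE A k p : (msize p <= k)%N ->
  Lsum A p = \sum_(m : 'X_{1..n < k}) p@_m *: A m.
Proof.
move=> lt_pk; pose I : subFinType _ := 'X_{1..n < k}.
rewrite /Lsum (big_mksub I) //=; first last.
  by move=> x /msize_mdeg_lt /leq_trans; apply.
  by rewrite msupp_uniq.
by rewrite big_rmcond //= => i; move/memN_msupp_eq0 ->; rewrite scale0r.
Qed.

Lemma LsumD A p q : Lsum A (p + q) = Lsum A p + Lsum A q.
Proof.
pose k := (msize p + msize q + msize (p + q))%N.
have h1 : (msize p <= k)%N by rewrite /k -addnA leq_addr.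
have h2 : (msize q <= k)%N by rewrite /k addnAC leq_addl.
have h3 : (msize (p + q) <= k)%N by rewrite /k leq_addl.
rewrite !(LsumE A h1, LsumE A h2, LsumE A h3).
by rewrite -big_split; apply: eq_bigr => i _; rewrite mcoeffD scalerDl.
Qed.

Lemma LsumZ A c p : Lsum A (c *: p) = c *: Lsum A p.
Proof.
pose k := (msize p + msize (c *: p))%N.
rewrite !(LsumE A (k := k)) ?leq_addl ?leq_addr //.
by rewrite scaler_sumr; apply: eq_bigr => i _; rewrite mcoeffZ scalerA.
Qed.

Lemma Lsum_term p : Lsum (@term K n) p = p.
Proof. by rewrite /Lsum {3}[p]mpolyE. Qed.

Lemma Lsum_coef A p u : (Lsum A p)@_u != 0 -> exists2 m, m \in msupp p & (A m)@_u != 0.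
Proof.
rewrite /Lsum raddf_sum /= => h; apply: NNPP => nex; move/eqP: h; apply.
apply: big1_seq => m /andP[_ mi]; rewrite mcoeffZ.
case: (eqVneq (A m)@_u 0) => [->|ne]; first by rewrite mulr0.
by case: nex; exists m.
Qed.

Lemma Lsum_ext A B p : (forall m, A m = B m) -> Lsum A p = Lsum B p.
Proof. by move=> h; apply: eq_bigr => m _; rewrite h. Qed.

Lemma Lsum_split A B p : Lsum (fun m => A m + B m) p = Lsum A p + Lsum B p.
Proof. by rewrite /Lsum -big_split; apply: eq_bigr => m _; rewrite scalerDr. Qed.

Lemma Lsum_scal c A p : Lsum (fun m => c *: A m) p = c *: Lsum A p.
Proof. by rewrite /Lsum scaler_sumr; apply: eq_bigr => m _; rewrite !scalerA mulrC. Qed.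

Lemma Lsum0 p : Lsum (fun _ => 0) p = 0.
Proof. by rewrite /Lsum big1 // => m _; rewrite scaler0. Qed.

Definition inner (f : S K n) (m : mono) : P :=
  \sum_(g : 'X_{1..n < (mdeg m).+1} | (bmnm g <= m)%MM)
                  f (bmnm g) *: term K (m - bmnm g)%MM.

Definition inner' (f : S K n) (m : mono) : P :=
  \sum_(g : 'X_{1..n < (mdeg m).+1} | (bmnm g <= m)%MM && (bmnm g != 0%MM))
                  f (bmnm g) *: term K (m - bmnm g)%MM.

Lemma actE f p : act f p = Lsum (inner f) p. Proof. by []. Qed.

Lemma inner_split f m : inner f m = f 0%MM *: term K m + inner' f m.
Proof.
have h0 : (mdeg (0%MM : mono) < (mdeg m).+1)%N by rewrite mdeg0.
pose g0 : 'X_{1..n < (mdeg m).+1} := BMultinom h0.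
rewrite /inner (bigD1 g0) /=; last by apply/mnm_lepP => i; rewrite mnm0E.
rewrite subm0; congr (_ + _); apply: eq_bigl => g.
Qed.

Lemma act_split f p : act f p = f 0%MM *: p + Lsum (inner' f) p.
Proof.
rewrite actE (Lsum_ext _ (inner_split f)) Lsum_split Lsum_scal.
by rewrite Lsum_term.
Qed.

Lemma actD f (a b : P) : act f (a + b) = act f a + act f b.
Proof. by rewrite !actE LsumD. Qed.
Lemma actZ f c (a : P) : act f (c *: a) = c *: act f a.
Proof. by rewrite !actE LsumZ. Qed.

Definition cst (c : K) : S K n := fun g => if g == 0%MM then c else 0.

Lemma act_cst c (a : P) : act (cst c) a = c *: a.
Proof.
rewrite act_split /cst eqxx (Lsum_ext _ (B := fun _ => 0)) ?Lsum0 ?addr0 //.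
move=> m; rewrite /inner' big1 // => g /andP[_ nz].
by rewrite (negbTE nz) scale0r.
Qed.

Section WithOrd.
Variable ord : rel mono.
Hypothesis Hord : term_order ord.

Lemma inner'_coef f m u : (inner' f m)@_u != 0 -> ord u m.
Proof.
rewrite /inner' raddf_sum /= => h; apply: NNPP => nu; move/eqP: h; apply.
apply: big1 => g /andP[le nz]; rewrite mcoeffZ /term mcoeffX.
case: eqP => [e|_]; last by rewrite mulr0.
by case: nu; rewrite -e; apply: ord_sub.
Qed.

Lemma Lsum_inner'_sbelow f t p : below ord t p -> sbelow ord t (Lsum (inner' f) p).
Proof.
move=> h u; rewrite mcoeff_msupp => /Lsum_coef [m mi /inner'_coef co].
have := ord_leo_trans Hord co. apply. exact: h.
Qed.

Lemma act_below f t (p : P) : below ord t p -> below ord t (act f p).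
Proof.
move=> h; rewrite act_split; apply: belowD; first exact: belowZ.
by move=> u /(Lsum_inner'_sbelow h) /ord_leo.
Qed.

End WithOrd.
End Act.

Section Sub.
Variables (K : fieldType) (n : nat).
Local Notation mono := 'X_{1..n}.
Local Notation P := {mpoly K[n]}.

Section M.
Variable M : E K n -> Prop.
Hypothesis HM : is_submodule M.
Lemma sub0 : M 0. Proof. by case: HM. Qed.
Lemma subD a b : M a -> M b -> M (a + b). Proof. by case: HM => _ h _; apply: h. Qed.
Lemma subA f a : M a -> M (act f a). Proof. by case: HM => _ _ h; apply: h. Qed.
Lemma subZ c (a : P) : M a -> M (c *: a).
Proof. by move=> h; rewrite -act_cst; apply: subA. Qed.
Lemma subN (a : P) : M a -> M (- a).
Proof. by move=> h; rewrite -scaleN1r; apply: subZ. Qed.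
Lemma subB (a b : P) : M a -> M b -> M (a - b).
Proof. by move=> ha hb; apply: subD ha (subN hb). Qed.
End M.

Variable ord : rel mono.
Hypothesis Hord : term_order ord.
Variable N : E K n -> Prop.
Hypothesis HN : is_submodule N.
Hypothesis HfN : finite_length N.

Definition Pu (u : mono) : E K n -> Prop := fun x => N x /\ below ord u x.

Lemma Pu_sub u : is_submodule (Pu u).
Proof.
split; first by split; [exact: sub0 | exact: below0].
  by move=> a b [Na ba] [Nb bb]; split; [exact: subD | exact: belowD].
by move=> f a [Na ba]; split; [exact: subA | exact: act_below].
Qed.

Lemma LT_ind (Q : mono -> Prop) :
  (forall u, LTset ord N u -> (forall v, LTset ord N v -> ord v u -> Q v) -> Q u) ->
  forall u, LTset ord N u -> Q u.
Proof.
move=> IH u0 Hu0; apply: NNPP => nQ.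
have chainex : forall k, exists c : nat -> mono, [/\ c 0%N = u0,
   (forall i, (i <= k)%N -> LTset ord N (c i) /\ ~ Q (c i)) &
   (forall i, (i < k)%N -> ord (c i.+1) (c i))].
  elim=> [|k [c [c0 hc hd]]].
    exists (fun _ => u0); split=> // i; rewrite leqn0 => /eqP ->; by split.
  have [v [Hv [Hvo nQv]]] : exists v, LTset ord N v /\ ord v (c k) /\ ~ Q v.
    apply: NNPP => H; apply: (proj2 (hc k (leqnn k))).
    apply: IH; first exact: (proj1 (hc k (leqnn k))).
    move=> v Hv Ho; apply: NNPP => nv; apply: H; by exists v.
  exists (fun i => if i == k.+1 then v else c i); split => //.
    move=> i; rewrite leq_eqVlt; case: eqP => [->|_] /=; first by split.
    by rewrite ltnS => /hc.
  move=> i; rewrite ltnS leq_eqVlt; case/orP => [/eqP->|lt].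
    by rewrite eqxx ltn_eqF.
  by rewrite !ltn_eqF // ?hd // ltnW.
case: HfN => B HB.
have [c [c0 hc hd]] := chainex B.+1.
pose ch i := Pu (c (B.+1 - i)%N).
have : (B.+1 <= B)%N; last by rewrite ltnn.
apply: (HB ch) => i hi.
  split; first exact: Pu_sub.
  by move=> x [].
have e : (B.+1 - i = (B.+1 - i.+1).+1)%N by rewrite subnSK.
have ho : ord (c (B.+1 - i)%N) (c (B.+1 - i.+1)%N).
  by rewrite e; apply: hd; rewrite -e leq_subr.
split.
  move=> x [Nx bx]; split=> //; apply: (below_weak Hord bx); exact: ord_leo ho.
move=> same.
have [eta [Neta nz LTe]] := proj1 (hc (B.+1 - i.+1)%N (leq_subr _ _)).
have : ch i.+1 eta by split => //; rewrite -LTe; apply: (LT_below Hord).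
move/same => [_ /(below_LT Hord nz)]; rewrite LTe => l.
by move: (leo_ord_trans Hord l ho); rewrite (negbTE (ord_irr Hord _)).
Qed.

Lemma LT_min (X : mono -> Prop) : (forall u, X u -> LTset ord N u) ->
  (exists u, X u) -> exists w, X w /\ forall v, X v -> ~~ ord v w.
Proof.
move=> HX [u Xu].
suff : forall u, LTset ord N u -> X u -> exists w, X w /\ forall v, X v -> ~~ ord v w.
  by move/(_ u (HX u Xu) Xu).
apply: LT_ind => {Xu}u _ IH Xu.
case: (classic (exists v, X v /\ ord v u)) => [[v [Xv ov]]|nex].
  exact: IH v (HX v Xv) ov Xv.
exists u; split=> // v Xv; apply/negP => ov; apply: nex; by exists v.
Qed.

Lemma LTset_N (eta : P) : N eta -> eta != 0 -> LTset ord N (LT ord eta).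
Proof. by move=> h nz; exists eta. Qed.

Lemma LTset_sub (M : E K n -> Prop) u : subsetE M N -> LTset ord M u -> LTset ord N u.
Proof. by move=> s [e [Me nz h]]; exists e; split=> //; apply: s. Qed.

Lemma reduce_in (M : E K n -> Prop) t : is_submodule M -> subsetE M N ->
  (forall eta, N eta -> eta != 0 -> ~ LTset ord M (LT ord eta) -> ~~ ord (LT ord eta) t) ->
  forall eta, N eta -> eta != 0 -> ord (LT ord eta) t -> M eta.
Proof.
move=> HM sMN Hmin.
suff: forall u, LTset ord N u -> forall (eta : P), N eta -> eta != 0 -> LT ord eta = u -> ord u t -> M eta.
  by move=> h eta Ne nz o; apply: (h _ (LTset_N Ne nz)).
apply: LT_ind => u _ IH eta Ne nz LTe out.
have : LTset ord M u.
  apply: NNPP => nL; have := Hmin eta Ne nz; rewrite LTe => /(_ nL).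
  by rewrite out.
case=> zeta [Mz nzz LTz].
have zu : zeta@_u != 0 by rewrite -mcoeff_msupp -LTz; apply: (LT_supp Hord).
pose c := eta@_u / zeta@_u.
pose eta' := eta - c *: zeta.
have -> : eta = eta' + c *: zeta by rewrite /eta' subrK.
apply: subD => //; last exact: subZ.
case: (eqVneq eta' 0) => [->|nz']; first exact: sub0.
have sb : sbelow ord u eta'.
  apply: cancel_below => //.
    by rewrite -LTe; apply: (LT_below Hord).
  by rewrite -LTz; apply: (LT_below Hord).
have Ne' : N eta' by apply: subB => //; apply: subZ => //; apply: sMN.
have o := sbelow_LT Hord nz' sb.
exact: (IH _ (LTset_N Ne' nz') o eta' Ne' nz' erefl (ord_trans Hord o out)).
Qed.

Lemma seq_max (Q : mono -> Prop) (s : seq mono) : (exists2 m, m \in s & Q m) ->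
  exists m, [/\ m \in s, Q m & forall x, x \in s -> Q x -> leo ord x m].
Proof.
elim: s => [[m]//|x s IH] Hex.
case: (classic (exists2 m, m \in s & Q m)) => [/IH [m [ms Qm hm]]|nex].
  case: (classic (Q x)) => Qx.
    case/orP: (leo_total Hord x m) => [l|o].
      exists m; split; rewrite ?in_cons ?ms ?orbT //.
      move=> y; rewrite in_cons; case/orP => [/eqP->//|]; exact: hm.
    exists x; split; rewrite ?mem_head //.
    move=> y; rewrite in_cons; case/orP => [/eqP->_|ys Qy]; first exact: leo_refl.
    exact: ord_leo (leo_ord_trans Hord (hm y ys Qy) o).
  exists m; split; rewrite ?in_cons ?ms ?orbT //.
  move=> y; rewrite in_cons; case/orP => [/eqP->//|]; exact: hm.
have Qx : Q x.
  case: Hex => m; rewrite in_cons; case/orP => [/eqP->//|ms Qm].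
  by case: nex; exists m.
exists x; split; rewrite ?mem_head //.
move=> y; rewrite in_cons; case/orP => [/eqP->_|ys Qy]; first exact: leo_refl.
by case: nex; exists y.
Qed.

Definition nored (M : E K n -> Prop) (x : P) := forall m, m \in msupp x -> ~ LTset ord M m.

Lemma reduce_full (M : E K n -> Prop) : is_submodule M -> subsetE M N ->
  forall xi, N xi -> exists xi', [/\ M (xi - xi'), N xi' & nored M xi'].
Proof.
move=> HM sMN.
have main : forall u, LTset ord N u -> forall xi : P, N xi ->
   (forall m, m \in msupp xi -> LTset ord M m -> leo ord m u) ->
   exists xi', [/\ M (xi - xi'), N xi' & nored M xi'].
  apply: LT_ind => u _ IH.
  have aux : forall xi : P, N xi ->
     (forall m, m \in msupp xi -> LTset ord M m -> ord m u) ->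
     exists xi', [/\ M (xi - xi'), N xi' & nored M xi'].
    move=> xi Nxi hb.
    case: (classic (exists2 m, m \in msupp xi & LTset ord M m)) => [ex|nex].
      have [v [vin Lv hv]] := seq_max ex.
      apply: (IH v (LTset_sub sMN Lv) (hb v vin Lv) xi Nxi hv).
    exists xi; split=> //; first by rewrite subrr; exact: sub0.
    by move=> m mi Lm; apply: nex; exists m.
  move=> xi Nxi hb.
  case: (classic (u \in msupp xi /\ LTset ord M u)) => [[uin [zeta [Mz nzz LTz]]]|nu].
    have zu : zeta@_u != 0 by rewrite -mcoeff_msupp -LTz; apply: (LT_supp Hord).
    pose c := xi@_u / zeta@_u.
    pose xi1 := xi - c *: zeta.
    have Nxi1 : N xi1 by apply: subB => //; apply: subZ => //; apply: sMN.
    have [xi' [M1 N' nr]] : exists xi', [/\ M (xi1 - xi'), N xi' & nored M xi'].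
      apply: aux => // m min Lm.
      have lm : leo ord m u.
        move: min => /msuppB_le; rewrite mem_cat; case/orP => [mi|/msuppZ_le mi].
          exact: hb.
        by rewrite -LTz; apply: (LT_below Hord).
      apply: (leo_neq lm); apply/negP => /eqP e; move: min; rewrite e mcoeff_msupp.
      by rewrite mcoeffB mcoeffZ divfK // subrr eqxx.
    exists xi'; split=> //.
    have -> : xi - xi' = (xi1 - xi') + c *: zeta by rewrite /xi1 addrAC subrK.
    by apply: subD => //; apply: subZ.
  apply: aux => // m min Lm; apply: (leo_neq (hb m min Lm)).
  by apply/negP => /eqP e; apply: nu; rewrite -e.
move=> xi Nxi.
case: (classic (exists2 m, m \in msupp xi & LTset ord M m)) => [ex|nex].
  have [v [vin Lv hv]] := seq_max ex.
  exact: (main v (LTset_sub sMN Lv) xi Nxi hv).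
exists xi; split=> //; first by rewrite subrr; exact: sub0.
by move=> m mi Lm; apply: nex; exists m.
Qed.

End Sub.

Section Main.
Variables (K : fieldType) (n : nat).
Local Notation mono := 'X_{1..n}.
Local Notation P := {mpoly K[n]}.
Variable ord : rel mono.
Hypothesis Hord : term_order ord.
Variable N : E K n -> Prop.
Hypothesis HN : is_submodule N.
Hypothesis HfN : finite_length N.

Lemma addS_intro (M : E K n -> Prop) (xi x : P) c : M (x - c *: xi) -> addS M xi x.
Proof. by move=> h; exists (x - c *: xi), (cst c); rewrite act_cst subrK. Qed.

Lemma addS_incl (M : E K n -> Prop) (xi : P) : subsetE M (addS M xi).
Proof. by move=> x h; apply: (@addS_intro _ _ _ 0); rewrite scale0r subr0. Qed.

Lemma addS_xi (M : E K n -> Prop) (xi : P) : is_submodule M -> addS M xi xi.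
Proof. by move=> HM; apply: (@addS_intro _ _ _ 1); rewrite scale1r subrr; apply: sub0. Qed.

Lemma LTset_mono (M M' : E K n -> Prop) t : subsetE M M' -> LTset ord M t -> LTset ord M' t.
Proof. by move=> s [e [Me nz h]]; exists e; split=> //; apply: s. Qed.

Section Step.
Variables (M : E K n -> Prop) (xi : P).
Hypothesis HM : is_submodule M.
Hypothesis sMN : subsetE M N.
Hypothesis Hv : valid_step ord N M xi.

Lemma xi_notin : ~ M xi.
Proof. by case: Hv => _ _ nz nL _ Mx; apply: nL; exists xi. Qed.

Lemma act_rest f : M (act f xi - f 0%MM *: xi).
Proof.
case: Hv => _ Nxi nz nL Hmin.
have e : act f xi - f 0%MM *: xi = Lsum (inner' f) xi by rewrite act_split addrC addKr.
case: (eqVneq (act f xi - f 0%MM *: xi) 0) => [->|nz']; first exact: sub0.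
have Nm : N (act f xi - f 0%MM *: xi).
  by apply: subB => //; [apply: subA | apply: subZ].
apply: (reduce_in Hord HN HfN HM sMN Hmin Nm nz').
apply: (sbelow_LT Hord nz'); rewrite e.
apply: Lsum_inner'_sbelow => //; exact: (LT_below Hord).
Qed.

Lemma addS_elim x : addS M xi x -> exists c, M (x - c *: xi).
Proof.
case=> a [f [Ma ->]]; exists (f 0%MM); rewrite -addrA.
by apply: subD => //; apply: act_rest.
Qed.

Lemma coef_unique (x : P) c d : M (x - c *: xi) -> M (x - d *: xi) -> c = d.
Proof.
move=> h1 h2; apply: NNPP => ne; apply: xi_notin.
have h := subB HM h1 h2.
have e : (x - c *: xi) - (x - d *: xi) = (d - c) *: xi.
  by rewrite scalerBl opprB addrC addrA subrK.
rewrite e in h; have := subZ HM (d - c)^-1 h.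
by rewrite scalerA mulVf ?scale1r // subr_eq0; apply/eqP => e'; apply: ne.
Qed.

Lemma rep_add (a b : P) c d : M (a - c *: xi) -> M (b - d *: xi) ->
  M ((a + b) - (c + d) *: xi).
Proof.
move=> h1 h2; have := subD HM h1 h2.
by rewrite scalerDl opprD addrACA.
Qed.

Lemma rep_act (a : P) c h : M (a - c *: xi) -> M (act h a - (c * h 0%MM) *: xi).
Proof.
move=> ha.
have ex : a = (a - c *: xi) + c *: xi by rewrite subrK.
rewrite {1}ex actD actZ -scalerA -addrA -scalerBr.
apply: subD => //; first exact: subA.
by apply: subZ => //; apply: act_rest.
Qed.

Lemma addS_sub : is_submodule (addS M xi).
Proof.
split.
- apply: (@addS_intro _ _ _ 0); rewrite scale0r subr0; exact: sub0.
- move=> a b /addS_elim [c hc] /addS_elim [d hd].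
  exact: addS_intro (rep_add hc hd).
- move=> f a /addS_elim [c hc]; exact: addS_intro (rep_act f hc).
Qed.

Lemma addS_N : subsetE (addS M xi) N.
Proof.
case: Hv => _ Nxi _ _ _.
by move=> x [a [f [Ma ->]]]; apply: subD => //; [apply: sMN | apply: subA].
Qed.

Definition phi (x : P) : K := epsilon (inhabits 0) (fun c => M (x - c *: xi)).

Lemma phi_eq (x : P) c : M (x - c *: xi) -> phi x = c.
Proof.
move=> h; have := epsilon_spec (inhabits 0) (fun c => M (x - c *: xi)) (ex_intro _ c h).
by rewrite -/(phi x) => h'; apply: coef_unique h' h.
Qed.

Lemma phiP (x : P) : addS M xi x -> M (x - phi x *: xi).
Proof. by case/addS_elim => c h; rewrite (phi_eq h). Qed.

Lemma addS_quot : quot_iso_K (addS M xi) M.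
Proof.
exists phi; split.
- move=> a b ha hb; apply: phi_eq; exact: rep_add (phiP ha) (phiP hb).
- move=> f a ha; rewrite mulrC; apply: phi_eq; exact: rep_act (phiP ha).
- move=> c; exists (c *: xi); split.
    by apply: (addS_intro (c := c)); rewrite subrr; apply: sub0.
  by apply: phi_eq; rewrite subrr; apply: sub0.
- move=> a ha; split.
    by move=> e; have := phiP ha; rewrite e scale0r subr0.
  by move=> h; apply: phi_eq; rewrite scale0r subr0.
Qed.

End Step.

Lemma T1_props : is_submodule (T1 N) /\ subsetE (T1 N) N.
Proof.
split.
  split.
  - by move=> M HM _; apply: sub0.
  - by move=> a b ha hb M HM sA; apply: subD => //; [apply: ha | apply: hb].
  - by move=> f a ha M HM sA; apply: subA => //; apply: ha.
by move=> x h; apply: h => // y [].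
Qed.

Lemma chain_props s : valid_run ord N s -> forall i, (i <= size s)%N ->
  is_submodule (chain N s i) /\ subsetE (chain N s i) N.
Proof.
move=> hr; elim=> [|i IH] hi; first exact: T1_props.
have [HM sMN] := IH (ltnW hi).
have Hv := hr i hi.
by split; [exact: addS_sub | exact: addS_N].
Qed.

Lemma chain_rcons s x i : (i <= size s)%N -> chain N (rcons s x) i = chain N s i.
Proof.
elim: i => // i IH hi /=; rewrite IH ?(ltnW hi) //.
by rewrite nth_rcons hi.
Qed.

Lemma valid_run_rcons s x : valid_run ord N s ->
  valid_step ord N (chain N s (size s)) x -> valid_run ord N (rcons s x).
Proof.
move=> hr hv i; rewrite size_rcons ltnS leq_eqVlt; case/orP => [/eqP->|lt].
  by rewrite chain_rcons // nth_rcons ltnn eqxx.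
by rewrite chain_rcons ?(ltnW lt) // nth_rcons lt; apply: hr.
Qed.

Lemma valid_run_last s x : valid_run ord N (rcons s x) ->
  valid_step ord N (chain N s (size s)) x.
Proof.
move=> h; have := h (size s); rewrite size_rcons ltnSn chain_rcons //.
by rewrite nth_rcons ltnn eqxx; apply.
Qed.

Lemma exists_valid (M : E K n -> Prop) : is_submodule M -> subsetE M N ->
  ~ sameE M N -> exists xi, valid_step ord N M xi.
Proof.
move=> HM sMN nsame.
have [eta [Neta nMeta]] : exists eta, N eta /\ ~ M eta.
  apply: NNPP => H; apply: nsame => x; split; first exact: sMN.
  move=> Nx; apply: NNPP => nM; apply: H; by exists x.
have [eta' [Md Neta' nr]] := reduce_full Hord HN HfN HM sMN Neta.
have nz' : eta' != 0.
  by apply/negP => /eqP e; apply: nMeta; move: Md; rewrite e subr0.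
pose X u := exists e : P, [/\ N e, e != 0, ~ LTset ord M (LT ord e) & LT ord e = u].
have HX : forall u, X u -> LTset ord N u.
  by move=> u [e [Ne nz _ <-]]; exists e.
have [w [[xi [Nxi nzxi nLxi exi]] hmin]] : exists w, X w /\ forall v, X v -> ~~ ord v w.
  apply: (LT_min Hord HN HfN HX); exists (LT ord eta'); exists eta'; split=> //.
  exact/nr/(LT_supp Hord).
exists xi; split=> //.
by move=> e Ne nz nL; rewrite exi; apply: hmin; exists e.
Qed.

Lemma LT_same (M M' : E K n -> Prop) xi xi' : sameE M M' ->
  valid_step ord N M xi -> valid_step ord N M' xi' -> LT ord xi = LT ord xi'.
Proof.
move=> same [_ Nxi nz nL Hmin] [_ Nxi' nz' nL' Hmin'].
apply: (leo_antisym Hord); apply: (Nord_leo Hord).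
  apply: Hmin => // h; apply: nL'; move: h; apply: LTset_mono => x; exact: (proj1 (same x)).
apply: Hmin' => // h; apply: nL; move: h; apply: LTset_mono => x; exact: (proj2 (same x)).
Qed.

Lemma same_step (M M' : E K n -> Prop) xi xi' :
  is_submodule M -> subsetE M N -> is_submodule M' -> subsetE M' N -> sameE M M' ->
  valid_step ord N M xi -> valid_step ord N M' xi' -> subsetE (addS M' xi') (addS M xi).
Proof.
move=> HM sMN HM' sM'N same Hv Hv'.
have eLT := LT_same same Hv Hv'.
case: (Hv) => _ Nxi nz nL Hmin; case: (Hv') => _ Nxi' nz' nL' Hmin'.
pose t := LT ord xi.
have xt : xi@_t != 0 by rewrite -mcoeff_msupp; apply: (LT_supp Hord).
pose c := xi'@_t / xi@_t.
have Md : M (xi' - c *: xi).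
  case: (eqVneq (xi' - c *: xi) 0) => [->|nzd]; first exact: sub0.
  have Nd : N (xi' - c *: xi) by apply: subB => //; apply: subZ.
  apply: (reduce_in Hord HN HfN HM sMN Hmin Nd nzd).
  apply: (sbelow_LT Hord nzd); apply: cancel_below => //.
    by rewrite /t eLT; apply: (LT_below Hord).
  exact: (LT_below Hord).
move=> x /(addS_elim HM' sM'N Hv') [d hd].
apply: (@addS_intro _ _ _ (d * c)).
have -> : x - (d * c) *: xi = (x - d *: xi') + d *: (xi' - c *: xi).
  by rewrite scalerBr scalerA addrA subrK.
apply: subD => //; last exact: subZ.
by case: (same (x - d *: xi')) => _; apply.
Qed.

End Main.

Theorem theorem3p9 (K : fieldType) (n : nat) (ord : rel 'X_{1..n})
    (N : E K n -> Prop) :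
  term_order ord -> is_submodule N -> finite_length N ->
  (exists B : nat, forall s, valid_run ord N s -> (size s <= B)%N) /\
  (forall s, valid_run ord N s -> ~ sameE (chain N s (size s)) N ->
     exists xi, valid_run ord N (rcons s xi)) /\
  (forall s, valid_run ord N s ->
     (forall i, (i <= size s)%N ->
        is_submodule (chain N s i) /\ subsetE (chain N s i) N) /\
     (forall i, (i < size s)%N -> subsetE (chain N s i) (chain N s i.+1))) /\
  (forall s, valid_run ord N s -> forall i, (i < size s)%N ->
     quot_iso_K (chain N s i.+1) (chain N s i)) /\
  (forall s, valid_run ord N s -> forall i, (i.+1 < size s)%N ->
     ord (LT ord (nth 0 s i)) (LT ord (nth 0 s i.+1))) /\
  (forall s t, valid_run ord N s -> valid_run ord N t ->
     forall i, (i <= size s)%N -> (i <= size t)%N ->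
     sameE (chain N s i) (chain N t i)) /\
  (forall s, valid_run ord N s -> ~ sameE (chain N s (size s)) N ->
     (exists xi, valid_run ord N (rcons s xi) /\
        forall m, m \in msupp xi -> ~ LTset ord (chain N s (size s)) m) /\
     (forall xi xi',
        valid_run ord N (rcons s xi) ->
        (forall m, m \in msupp xi -> ~ LTset ord (chain N s (size s)) m) ->
        valid_run ord N (rcons s xi') ->
        (forall m, m \in msupp xi' -> ~ LTset ord (chain N s (size s)) m) ->
        exists c : K, c != 0 /\ xi' = c *: xi)).
Proof.
move=> Hord HN HfN.
split.
  have [B HB] := HfN; exists B => s hs.
  apply: (HB (chain N s) (size s)) => i hi.
    exact: (chain_props Hord HN HfN hs).
  split; first exact: addS_incl.
  move=> same; have [HM sMN] := chain_props Hord HN HfN hs (ltnW hi).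
  apply: (xi_notin (hs i hi)); apply/(proj2 (same _)); exact: addS_xi.
split.
  move=> s hs ns; have [HM sMN] := chain_props Hord HN HfN hs (leqnn _).
  have [xi hv] := exists_valid Hord HN HfN HM sMN ns.
  by exists xi; apply: valid_run_rcons.
split.
  move=> s hs; split; first exact: (chain_props Hord HN HfN hs).
  move=> i hi; exact: addS_incl.
split.
  move=> s hs i hi; have [HM sMN] := chain_props Hord HN HfN hs (ltnW hi).
  exact: (addS_quot Hord HN HfN HM sMN (hs i hi)).
split.
  move=> s hs i hi.
  have hi' : (i < size s)%N by apply: ltnW.
  have [HM sMN] := chain_props Hord HN HfN hs (ltnW hi').
  case: (hs i hi') => _ _ nzi _ Hmin.
  case: (hs i.+1 hi) => _ Nx nz nL _.
  have l := Nord_leo Hord (Hmin _ Nx nz (fun h => nL (LTset_mono (addS_incl (M := chain N s i) (nth 0 s i)) h))).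
  apply: (leo_neq l); apply/negP => /eqP e; apply: nL; rewrite -e.
  by exists (nth 0 s i); split => //; apply: addS_xi.
split.
  move=> s t hs ht; elim=> [|i IH] his hit; first by move=> x; split.
  have IH' := IH (ltnW his) (ltnW hit).
  have [HMs sMNs] := chain_props Hord HN HfN hs (ltnW his).
  have [HMt sMNt] := chain_props Hord HN HfN ht (ltnW hit).
  have IHs : sameE (chain N t i) (chain N s i) by move=> x; apply: iff_sym.
  move=> x; split.
    exact: (same_step Hord HN HfN HMt sMNt HMs sMNs IHs (ht i hit) (hs i his)).
  exact: (same_step Hord HN HfN HMs sMNs HMt sMNt IH' (hs i his) (ht i hit)).
move=> s hs ns; have [HM sMN] := chain_props Hord HN HfN hs (leqnn _).
set M := chain N s (size s) in HM sMN ns *.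
split.
  have [xi hv] := exists_valid Hord HN HfN HM sMN ns.
  case: (hv) => _ Nxi nzxi nLxi Hminxi.
  have [xi' [Md Nxi' nr]] := reduce_full Hord HN HfN HM sMN Nxi.
  have nz' : xi' != 0.
    apply/negP => /eqP e; apply: (xi_notin hv); by move: Md; rewrite e subr0.
  have nL' : ~ LTset ord M (LT ord xi') := nr _ (LT_supp Hord nz').
  have eLT : LT ord xi' = LT ord xi.
    apply: (leo_antisym Hord); last exact: (Nord_leo Hord (Hminxi _ Nxi' nz' nL')).
    apply: NNPP => nle.
    have o : ord (LT ord xi) (LT ord xi').
      by case/orP: (leo_total Hord (LT ord xi') (LT ord xi)).
    set u := LT ord xi' in o nle nL' *.
    have uin : u \in msupp (xi - xi').
      rewrite mcoeff_msupp mcoeffB.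
      have -> : xi@_u = 0.
        apply/eqP; rewrite mcoeff_eq0; apply/negP => ui.
        by move: (leoNord Hord (LT_max Hord ui)); rewrite o.
      by rewrite sub0r oppr_eq0 -mcoeff_msupp; apply: (LT_supp Hord nz').
    apply: nL'; exists (xi - xi'); split => //.
      by apply/negP => /eqP e; move: uin; rewrite e mcoeff_msupp mcoeff0 eqxx.
    apply: (LT_unique Hord uin); apply: belowD.
      exact: (below_weak Hord (LT_below Hord (eta := xi)) (ord_leo o)).
    exact/belowN/(LT_below Hord).
  exists xi'; split => //.
  apply: valid_run_rcons => //; split => //.
    by rewrite eLT.
move=> xi xi' r1 nr1 r2 nr2.
have v1 := valid_run_last r1; have v2 := valid_run_last r2.
have eLT := LT_same Hord (M := M) (fun x => iff_refl _) v1 v2.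
case: (v1) => _ Nxi nz nL Hmin; case: (v2) => _ Nxi' nz' nL' Hmin'.
pose t := LT ord xi.
have xt : xi@_t != 0 by rewrite -mcoeff_msupp; apply: (LT_supp Hord).
pose c := xi'@_t / xi@_t.
have d0 : xi' - c *: xi = 0.
  case: (eqVneq (xi' - c *: xi) 0) => // nzd; exfalso.
  have Nd : N (xi' - c *: xi) by apply: subB => //; apply: subZ.
  have nLd : ~ LTset ord M (LT ord (xi' - c *: xi)).
    move: (LT_supp Hord nzd) => /msuppB_le; rewrite mem_cat; case/orP => [/nr2 //|/msuppZ_le /nr1 //].
  have sb : sbelow ord t (xi' - c *: xi).
    apply: cancel_below => //; last exact: (LT_below Hord).
    by rewrite /t eLT; apply: (LT_below Hord).
  by move: (Hmin _ Nd nzd nLd); rewrite (sbelow_LT Hord nzd sb).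
exists c; split.
  apply/negP => /eqP c0; move: d0; rewrite c0 scale0r subr0 => e.
  by move: nz'; rewrite e eqxx.
by move/eqP: d0; rewrite subr_eq0 => /eqP.
Qed.
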